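(* For formulas of the language LTL: (1) $\mathbf{AX}^{gen}$ is sound and complete with respect to $\mathcal{M}$, the class of all finite and infinite temporal structures. (2) $\mathbf{AX}^{inf}$ is sound and complete with respect to $\mathcal{M}^{inf}$, the class of infinite temporal structures. (3) $\mathbf{AX}^{fin}$ is sound and complete with respect to $\mathcal{M}^{fin}$, the class of finite temporal structures. Here ''sound and complete with respect to a class $\mathcal{C}$'' means: a formula is provable in the axiomatization if and only if it is true at every position of every structure in $\mathcal{C}$.
   Context: LTL formulas are built from primitive propositions $p$ in a set $\Phi_0$ by the grammar $\phi,\psi ::= p \mid \neg\phi \mid \phi\wedge\psi \mid \bigcirc\phi \mid \phi\,\mathcal{U}\,\psi$. Abbreviations: $\phi\vee\psi := \neg(\neg\phi\wedge\neg\psi)$, $\phi\Rightarrow\psi := \neg\phi\vee\psi$, $\mathit{true}$ is a fixed propositional tautology, $\mathit{false} := \neg\mathit{true}$, $\Diamond\phi := \mathit{true}\,\mathcal{U}\,\phi$, $\Box\phi := \neg\Diamond\neg\phi$, and $\overline{\bigcirc}\phi := \neg\bigcirc\neg\phi$ (''strong next''; $\bigcirc$ is ''weak next''). A temporal structure is $M=(S,\sigma,\pi)$ with $S$ a set of states, $\sigma=s_0s_1\dots$ a finite (nonempty) or infinite sequence of states of $S$, and $\pi(s)\subseteq\Phi_0$ the propositions true at $s$. $M$ is finite iff $\sigma$ is finite. Positions of $\sigma$ are the indices $i$ of its elements. Truth at position $i$: $(M,i)\models p$ iff $p\in\pi(s_i)$; negation and conjunction as usual; $(M,i)\models\bigcirc\phi$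 iff $i$ is the last position of $\sigma$ (if $\sigma$ is finite) or $(M,i+1)\models\phi$; $(M,i)\models\phi\,\mathcal{U}\,\psi$ iff there is a position $j\ge i$ with $(M,j)\models\psi$ and $(M,k)\models\phi$ for all $i\le k<j$. (So $\bigcirc\mathit{false}$ holds exactly at the last position of a finite sequence.) $\mathbf{AX}^{gen}$ consists of: Prop: all instances of propositional tautologies; MP: from $\phi$ and $\phi\Rightarrow\psi$ infer $\psi$; T1: $\bigcirc\phi\wedge\bigcirc(\phi\Rightarrow\psi)\Rightarrow\bigcirc\psi$; T2': $\phi\,\mathcal{U}\,\psi\Leftrightarrow\psi\vee(\phi\wedge\overline{\bigcirc}(\phi\,\mathcal{U}\,\psi))$; T3': $\bigcirc\phi\Leftrightarrow(\bigcirc\mathit{false}\vee\overline{\bigcirc}\phi)$; RT1: from $\phi$ infer $\bigcirc\phi$; RT2: from $\phi'\Rightarrow\neg\psi\wedge\bigcirc\phi'$ infer $\phi'\Rightarrow\neg(\phi\,\mathcal{U}\,\psi)$. $\mathbf{AX}^{inf}$ is $\mathbf{AX}^{gen}$ plus the axiom Inf: $\neg\bigcirc\mathit{false}$. $\mathbf{AX}^{fin}$ is $\mathbf{AX}^{gen}$ plus the axiom Fin: $\Diamond\bigcirc\mathit{false}$. *)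

(* Defs.v *)
From Stdlib Require Import Arith.
Set Implicit Arguments.

Section LTL.
Variable Phi0 : Type.

Inductive form : Type :=
| FVar : Phi0 -> form
| FNeg : form -> form
| FAnd : form -> form -> form
| FNext : form -> form
| FUntil : form -> form -> form.

Definition FOr (a b : form) : form := FNeg (FAnd (FNeg a) (FNeg b)).
Definition FImp (a b : form) : form := FOr (FNeg a) b.
Definition FIff (a b : form) : form := FAnd (FImp a b) (FImp b a).
Definition FTrue (p0 : Phi0) : form := FNeg (FAnd (FVar p0) (FNeg (FVar p0))).
Definition FFalse (p0 : Phi0) : form := FNeg (FTrue p0).
Definition FEv (p0 : Phi0) (a : form) : form := FUntil (FTrue p0) a.
Definition FAlw (p0 : Phi0) (a : form) : form := FNeg (FEv p0 (FNeg a)).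
Definition FSNext (a : form) : form := FNeg (FNext (FNeg a)).

Inductive pform : Type :=
| PVar : nat -> pform
| PNeg : pform -> pform
| PAnd : pform -> pform -> pform.

Fixpoint peval (v : nat -> bool) (f : pform) : bool :=
  match f with
  | PVar n => v n
  | PNeg g => negb (peval v g)
  | PAnd g h => andb (peval v g) (peval v h)
  end.

Definition ptaut (f : pform) : Prop := forall v, peval v f = true.

Fixpoint psubst (s : nat -> form) (f : pform) : form :=
  match f with
  | PVar n => s n
  | PNeg g => FNeg (psubst s g)
  | PAnd g h => FAnd (psubst s g) (psubst s h)
  end.

Definition taut_instance (phi : form) : Prop :=
  exists (f : pform) (s : nat -> form), ptaut f /\ psubst s f = phi.

Inductive provable (p0 : Phi0) (extra : form -> Prop) : form -> Prop :=
| Ax_Prop : forall phi, taut_instance phi -> provable p0 extra phi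
| Ax_extra : forall phi, extra phi -> provable p0 extra phi
| R_MP : forall phi psi, provable p0 extra phi ->
    provable p0 extra (FImp phi psi) -> provable p0 extra psi
| Ax_T1 : forall phi psi,
    provable p0 extra (FImp (FAnd (FNext phi) (FNext (FImp phi psi))) (FNext psi))
| Ax_T2' : forall phi psi,
    provable p0 extra (FIff (FUntil phi psi)
                            (FOr psi (FAnd phi (FSNext (FUntil phi psi)))))
| Ax_T3' : forall phi,
    provable p0 extra (FIff (FNext phi) (FOr (FNext (FFalse p0)) (FSNext phi)))
| R_RT1 : forall phi, provable p0 extra phi -> provable p0 extra (FNext phi)
| R_RT2 : forall phi phi' psi,
    provable p0 extra (FImp phi' (FAnd (FNeg psi) (FNext phi'))) ->
    provable p0 extra (FImp phi' (FNeg (FUntil phi psi))).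

Definition no_extra : form -> Prop := fun _ => False.
Definition inf_axiom (p0 : Phi0) : form -> Prop :=
  fun phi => phi = FNeg (FNext (FFalse p0)).
Definition fin_axiom (p0 : Phi0) : form -> Prop :=
  fun phi => phi = FEv p0 (FNext (FFalse p0)).

Definition AXgen (p0 : Phi0) := provable p0 no_extra.
Definition AXinf (p0 : Phi0) := provable p0 (inf_axiom p0).
Definition AXfin (p0 : Phi0) := provable p0 (fin_axiom p0).

(* Temporal structures M = (S, sigma, pi).  sigma is given by [tseq] together
   with [tlen]: tlen = None means sigma is infinite (s_0 s_1 ...), and
   tlen = Some n means sigma = s_0 ... s_n is finite (nonempty); in that
   case the values tseq i for i > n are irrelevant. *)
Record tstruct : Type := TStruct {
  tstate : Type;
  tseq : nat -> tstate;
  tlen : option nat;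
  tpi : tstate -> Phi0 -> Prop
}.

Definition is_pos (M : tstruct) (i : nat) : Prop :=
  match tlen M with None => True | Some n => i <= n end.

Definition is_last (M : tstruct) (i : nat) : Prop := tlen M = Some i.

Fixpoint sat (M : tstruct) (i : nat) (phi : form) : Prop :=
  match phi with
  | FVar p => tpi M (tseq M i) p
  | FNeg a => ~ sat M i a
  | FAnd a b => sat M i a /\ sat M i b
  | FNext a => is_last M i \/ sat M (S i) a
  | FUntil a b => exists j, i <= j /\ is_pos M j /\ sat M j b /\
                    (forall k, i <= k < j -> sat M k a)
  end.

Definition is_finite (M : tstruct) : Prop := exists n, tlen M = Some n.
Definition is_infinite (M : tstruct) : Prop := tlen M = None.

Definition valid_in (C : tstruct -> Prop) (phi : form) : Prop :=
  forall M : tstruct, C M -> forall i, is_pos M i -> sat M i phi.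

End LTL.

(* Main.v *)
Require Import Defs.
From Stdlib Require Import Arith Lia List Bool Classical ClassicalEpsilon.
Import ListNotations.

Section Main.
Variable Phi0 : Type.
Variable p0 : Phi0.
Notation F := (form Phi0).

Definition decP (P : Prop) : bool :=
  if excluded_middle_informative P then true else false.
Lemma decP_true P : decP P = true <-> P.
Proof. unfold decP; destruct (excluded_middle_informative P) as [h|h];
  split; intro H; auto; try discriminate; contradiction. Qed.
Lemma decP_false P : decP P = false <-> ~ P.
Proof. unfold decP; destruct (excluded_middle_informative P) as [h|h];
  split; intro H; auto; try discriminate; contradiction. Qed.

Fixpoint beval (V : F -> bool) (f : F) : bool :=
  match f with
  | FNeg a => negb (beval V a)
  | FAnd a b => beval V a && beval V b
  | _ => V f
  end.

Fixpoint atl (f : F) : list F :=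
  match f with FNeg a => atl a | FAnd a b => atl a ++ atl b | _ => [f] end.
Fixpoint idx (L : list F) (a : F) : nat :=
  match L with [] => 0 | x :: l => if decP (x = a) then 0 else S (idx l a) end.
Lemma idx_nth L a d : In a L -> nth (idx L a) L d = a.
Proof.
  induction L as [|x L IH]; simpl; intros H; [contradiction|].
  unfold decP at 1; destruct (excluded_middle_informative (x = a)) as [E|E].
  - simpl; auto.
  - destruct H as [H|H].
    + contradiction.
    + simpl; auto.
Qed.
Fixpoint skel (L : list F) (f : F) : pform :=
  match f with
  | FNeg a => PNeg (skel L a)
  | FAnd a b => PAnd (skel L a) (skel L b)
  | _ => PVar (idx L f) end.
Lemma skel_subst L d g : incl (atl g) L -> psubst (fun n => nth n L d) (skel L g) = g.
Proof.
  induction g; simpl; intros H;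
   try (rewrite idx_nth; [reflexivity| apply H; left; reflexivity]).
  - rewrite IHg; auto.
  - rewrite IHg1, IHg2; auto;
    intros x Hx; apply H; apply in_or_app; auto.
Qed.
Lemma skel_eval L v g : peval v (skel L g) = beval (fun a => v (idx L a)) g.
Proof. induction g; simpl; rewrite ?IHg, ?IHg1, ?IHg2; reflexivity. Qed.
Lemma pc f : (forall V, beval V f = true) -> taut_instance f.
Proof.
  intros H. exists (skel (atl f) f), (fun n => nth n (atl f) f). split.
  - intro v. rewrite skel_eval. apply H.
  - apply skel_subst. apply incl_refl.
Qed.

Ltac bdes V := repeat match goal with
 | |- context [beval V ?x] => destruct (beval V x)
 | |- context [V ?x] => destruct (V x) end.
Ltac btac := let V := fresh "V" in intro V; simpl; bdes V; simpl; intuition congruence.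

Fixpoint conj (L : list F) : F :=
  match L with [] => FTrue p0 | x :: l => FAnd x (conj l) end.
Fixpoint disj (L : list F) : F :=
  match L with [] => FFalse p0 | x :: l => FOr x (disj l) end.
Lemma beval_conj V L : beval V (conj L) = forallb (beval V) L.
Proof. induction L; simpl; [destruct (V (FVar p0)); reflexivity | rewrite IHL; reflexivity]. Qed.
Lemma beval_disj V L : beval V (disj L) = existsb (beval V) L.
Proof. induction L; simpl; [destruct (V (FVar p0)); reflexivity |
  rewrite IHL; destruct (beval V a), (existsb (beval V) L); reflexivity]. Qed.
Lemma beval_imp V a b : beval V (FImp a b) = implb (beval V a) (beval V b).
Proof. simpl. destruct (beval V a), (beval V b); reflexivity. Qed.

Section Prov.
Variable extra : F -> Prop.
Notation Pv := (provable p0 extra).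

Lemma taut f : (forall V, beval V f = true) -> Pv f.
Proof. intros H; apply Ax_Prop, pc, H. Qed.

Lemma Pv_conj L : Forall Pv L -> Pv (conj L).
Proof.
  induction 1.
  - apply taut; btac.
  - eapply R_MP; [exact IHForall|]. eapply R_MP; [exact H|]. apply taut. btac.
Qed.

Lemma prop (L : list F) c : Forall Pv L ->
  (forall V, forallb (beval V) L = true -> beval V c = true) -> Pv c.
Proof.
  intros H1 H2. eapply R_MP; [apply Pv_conj, H1|]. apply taut. intro V.
  rewrite beval_imp, beval_conj. destruct (forallb (beval V) L) eqn:E; simpl; auto.
Qed.

Ltac fa := repeat (apply Forall_cons; [assumption|]); apply Forall_nil.
Ltac pr L := apply (prop L); [fa | btac].

Lemma NX_mono a b : Pv (FImp a b) -> Pv (FImp (FNext a) (FNext b)).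
Proof.
  intro H. pose proof (R_RT1 H) as H1. pose proof (Ax_T1 p0 extra a b) as H2.
  pr [FNext (FImp a b); FImp (FAnd (FNext a) (FNext (FImp a b))) (FNext b)].
Qed.

Lemma NX_list L b : Pv (FImp (conj L) b) -> Pv (FImp (conj (map (@FNext Phi0) L)) (FNext b)).
Proof.
  revert b; induction L as [|x L IH]; intros b H; simpl in *.
  - assert (Pv b) by pr [FImp (FTrue p0) b].
    pose proof (R_RT1 H0). pr [FNext b].
  - assert (H1 : Pv (FImp (conj L) (FImp x b))) by pr [FImp (FAnd x (conj L)) b].
    apply IH in H1. pose proof (Ax_T1 p0 extra x b) as H2.
    pr [FImp (conj (map (@FNext Phi0) L)) (FNext (FImp x b));
        FImp (FAnd (FNext x) (FNext (FImp x b))) (FNext b)].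
Qed.

Lemma conj_elem L x : In x L -> Pv (FImp (conj L) x).
Proof. intro H. apply taut. intro V. rewrite beval_imp, beval_conj.
  destruct (forallb (beval V) L) eqn:E; auto. rewrite forallb_forall in E.
  rewrite (E x H). reflexivity. Qed.
Lemma disj_elem L x : In x L -> Pv (FImp x (disj L)).
Proof. intro H. apply taut. intro V. rewrite beval_imp, beval_disj.
  destruct (beval V x) eqn:E; auto. simpl.
  apply existsb_exists. eauto. Qed.
Lemma disj_imp L c : (forall x, In x L -> Pv (FImp x c)) -> Pv (FImp (disj L) c).
Proof.
  induction L as [|x L IH]; intros H; simpl.
  - apply taut; btac.
  - assert (H1 : Pv (FImp x c)) by (apply H; left; auto).
    assert (H2 : Pv (FImp (disj L) c)) by (apply IH; intros; apply H; right; auto).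
    pr [FImp x c; FImp (disj L) c].
Qed.
Lemma disj_sub L L' : incl L L' -> Pv (FImp (disj L) (disj L')).
Proof. intro H. apply disj_imp. intros x Hx. apply disj_elem, H, Hx. Qed.

Lemma disj_filter {X} (g : X -> F) (f : X -> bool) L :
  Pv (FImp (FAnd (disj (map g L))
    (conj (map (fun x => FNeg (g x)) (filter (fun x => negb (f x)) L))))
    (disj (map g (filter f L)))).
Proof.
  induction L as [|x L IH]; simpl.
  - apply taut; btac.
  - destruct (f x) eqn:E; simpl.
    + pr [FImp (FAnd (disj (map g L))
         (conj (map (fun x => FNeg (g x)) (filter (fun x => negb (f x)) L))))
         (disj (map g (filter f L)))].
    + pr [FImp (FAnd (disj (map g L))
         (conj (map (fun x => FNeg (g x)) (filter (fun x => negb (f x)) L))))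
         (disj (map g (filter f L)))].
Qed.

End Prov.

Section Sem.
Variable M : tstruct Phi0.
Lemma sat_imp i a b : sat M i (FImp a b) <-> (sat M i a -> sat M i b).
Proof. simpl. split; intros H.
  - intros Ha; apply NNPP; intro Hb; apply H; split; auto.
  - intros [Ha Hb]. apply Hb, H, NNPP, Ha. Qed.
Lemma sat_or i a b : sat M i (FOr a b) <-> (sat M i a \/ sat M i b).
Proof. simpl. split; intros H.
  - destruct (classic (sat M i a)); auto. right; apply NNPP; intro; apply H; auto.
  - intros [H1 H2]; destruct H; auto. Qed.
Lemma sat_iff i a b : sat M i (FIff a b) <-> (sat M i a <-> sat M i b).
Proof. unfold FIff. change (sat M i (FAnd (FImp a b) (FImp b a))) with (sat M i (FImp a b) /\ sat M i (FImp b a)). rewrite !sat_imp. tauto. Qed.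
Lemma sat_neg i a : sat M i (FNeg a) <-> ~ sat M i a.
Proof. reflexivity. Qed.
Lemma sat_and i a b : sat M i (FAnd a b) <-> sat M i a /\ sat M i b.
Proof. reflexivity. Qed.
Lemma sat_true i : sat M i (FTrue p0).
Proof. simpl; tauto. Qed.
Lemma sat_false i : sat M i (FFalse p0) <-> False.
Proof. unfold FFalse. simpl sat at 1. pose proof (sat_true i). tauto. Qed.
Lemma sat_next i a : sat M i (FNext a) <-> is_last M i \/ sat M (S i) a.
Proof. reflexivity. Qed.
Lemma sat_snext i a : sat M i (FSNext a) <-> ~ is_last M i /\ sat M (S i) a.
Proof. unfold FSNext. simpl. split.
  - intros H. split; [intro; apply H; auto|]. apply NNPP; intro; apply H; auto.
  - intros [H1 H2] [H3|H3]; auto. Qed.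

Lemma sat_psubst i s f : sat M i (psubst s f) <-> peval (fun n => decP (sat M i (s n))) f = true.
Proof.
  induction f; simpl.
  - rewrite decP_true; tauto.
  - rewrite IHf. destruct (peval _ f); simpl; split; intros; try discriminate; auto.
  - rewrite IHf1, IHf2. rewrite andb_true_iff. tauto.
Qed.

Lemma last_pos i : is_last M i -> is_pos M i.
Proof. unfold is_last, is_pos; intros H; rewrite H; auto. Qed.
Lemma pos_next i : is_pos M i -> ~ is_last M i -> is_pos M (S i).
Proof. unfold is_last, is_pos; destruct (tlen M) as [n|]; auto.
  intros H1 H2. assert (i <> n) by (intro; subst; auto). lia. Qed.
Lemma pos_le i j : is_pos M j -> i <= j -> is_pos M i.
Proof. unfold is_pos; destruct (tlen M); auto. lia. Qed.
Lemma last_lt i j : is_pos M j -> i < j -> ~ is_last M i.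
Proof. unfold is_pos, is_last; destruct (tlen M); intros H1 H2 H3; try discriminate.
  injection H3; lia. Qed.
End Sem.

Lemma sound (C : tstruct Phi0 -> Prop) extra :
  (forall phi, extra phi -> valid_in C phi) ->
  forall phi, provable p0 extra phi -> valid_in C phi.
Proof.
  intros Hex phi Hp. induction Hp; intros M HM i Hi.
  - destruct H as [f [s [Ht Hs]]]. subst. apply sat_psubst. apply Ht.
  - apply Hex; auto.
  - specialize (IHHp1 M HM i Hi). specialize (IHHp2 M HM i Hi).
    rewrite sat_imp in IHHp2. auto.
  - rewrite sat_imp, sat_and, !sat_next, sat_imp. tauto.
  - rewrite sat_iff, sat_or, sat_and, sat_snext. simpl sat at 1. simpl sat at 3. split.
    + intros [j [Hij [Hpj [Hb Ha]]]].
      destruct (Nat.eq_dec i j) as [e|e]; [subst; left; auto|].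
      right. split; [apply Ha; lia|]. split; [apply (last_lt M i j); auto; lia|].
      exists j. repeat split; auto; try lia. intros k Hk; apply Ha; lia.
    + intros [Hb | [Ha [Hnl [j [Hij [Hpj [Hb Hk]]]]]]].
      * exists i. repeat split; auto. intros; lia.
      * exists j. repeat split; auto; try lia. intros k Hk'.
        destruct (Nat.eq_dec k i); [subst; auto|]. apply Hk; lia.
  - rewrite sat_iff, sat_or, !sat_next, sat_snext, sat_false.
    destruct (classic (is_last M i)); tauto.
  - rewrite sat_next. destruct (classic (is_last M i)) as [h|h]; [left; auto|].
    right. apply IHHp; auto. apply pos_next; auto.
  - rewrite sat_imp, sat_neg. intros H1 [j [Hij [Hpj [Hb _]]]].
    assert (Hall : forall d, i + d <= j -> sat M (i + d) phi').
    { induction d; intros Hd.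
      - rewrite Nat.add_0_r; auto.
      - assert (Hp' : is_pos M (i + d)) by (apply (pos_le M _ j); auto; lia).
        specialize (IHHp M HM (i + d) Hp'). rewrite sat_imp, sat_and, sat_next in IHHp.
        destruct (IHHp (IHd ltac:(lia))) as [_ [Hl|Hs]].
        + exfalso. apply (last_lt M (i+d) j); auto. lia.
        + replace (i + S d) with (S (i + d)) by lia. auto. }
    specialize (Hall (j - i) ltac:(lia)). replace (i + (j - i)) with j in Hall by lia.
    specialize (IHHp M HM j Hpj). rewrite sat_imp, sat_and, sat_neg in IHHp.
    apply (proj1 (IHHp Hall)); auto.
Qed.


Lemma min_ex (P : nat -> Prop) n : P n -> exists m, P m /\ forall k, k < m -> ~ P k.
Proof.
  induction n as [n IH] using lt_wf_ind. intros Hn.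
  destruct (classic (exists k, k < n /\ P k)) as [[k [Hk Pk]]|Hc].
  - apply (IH k Hk Pk).
  - exists n. split; auto. intros k Hk Pk. apply Hc; eauto.
Qed.

Definition children (g : F) : list F :=
  match g with FNeg a => [a] | FAnd a b => [a; b] | FNext a => [a]
  | FUntil a b => [a; b] | FVar _ => [] end.
Definition subcl (L : list F) := forall g, In g L -> incl (children g) L.

Section Comp.
Variable extra : F -> Prop.
Notation Pv := (provable p0 extra).
Ltac fa := repeat (apply Forall_cons; [assumption|]); apply Forall_nil.
Ltac pr L := apply (prop extra L); [fa | btac].

Section Atoms.
Variable Cl : list F.

Definition lit (pb : F * bool) : F := if snd pb then fst pb else FNeg (fst pb).
Definition chi (A : list bool) : F := conj (map lit (combine Cl A)).
Definition mem (A : list bool) (f : F) : Prop := Pv (FImp (chi A) f).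
Definition consis (A : list bool) : Prop := ~ Pv (FNeg (chi A)).
Fixpoint allb (n : nat) : list (list bool) :=
  match n with 0 => [[]]
  | S n => map (cons true) (allb n) ++ map (cons false) (allb n) end.
Definition Lall := filter (fun A => decP (consis A)) (allb (length Cl)).
Definition step A B := ~ Pv (FNeg (FAnd (chi A) (FSNext (chi B)))).
Definition succs A := filter (fun B => decP (step A B)) Lall.
Definition islast A := mem A (FNext (FFalse p0)).

Lemma allb_len n A : In A (allb n) -> length A = n.
Proof.
  revert A; induction n; simpl; intros A H.
  - destruct H as [<-|[]]; auto.
  - apply in_app_or in H; destruct H as [H|H]; apply in_map_iff in H;
    destruct H as [B [<- HB]]; simpl; f_equal; auto.
Qed.
Lemma allb_full n A : length A = n -> In A (allb n).
Proof.
  revert A; induction n; destruct A as [|b A]; simpl; intros H; try discriminate; auto.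
  apply in_or_app; destruct b; [left|right]; apply in_map; apply IHn; auto.
Qed.
Lemma chi_true V : beval V (chi (map (beval V) Cl)) = true.
Proof.
  unfold chi. rewrite beval_conj. generalize Cl; intro L; induction L as [|a L IH]; simpl; auto.
  unfold lit at 1; simpl. destruct (beval V a) eqn:E; simpl; rewrite ?E; simpl; auto.
Qed.
Lemma Pv_all : Pv (disj (map chi (allb (length Cl)))).
Proof.
  apply taut; intro V; rewrite beval_disj; apply existsb_exists.
  exists (chi (map (beval V) Cl)); split; [apply in_map, allb_full, length_map|apply chi_true].
Qed.
Lemma Pv_Lall : Pv (disj (map chi Lall)).
Proof.
  pose proof (disj_filter extra chi (fun A => decP (consis A)) (allb (length Cl))) as H1.
  pose proof Pv_all as H2.
  assert (H3 : Pv (conj (map (fun x => FNeg (chi x))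
      (filter (fun x => negb (decP (consis x))) (allb (length Cl)))))).
  { apply Pv_conj. apply Forall_forall. intros x Hx. apply in_map_iff in Hx.
    destruct Hx as [A [<- HA]]. apply filter_In in HA. destruct HA as [_ HA].
    rewrite negb_true_iff, decP_false in HA. unfold consis in HA. apply NNPP; auto. }
  unfold Lall. pr [FImp (FAnd (disj (map chi (allb (length Cl))))
      (conj (map (fun x => FNeg (chi x))
      (filter (fun x => negb (decP (consis x))) (allb (length Cl))))))
      (disj (map chi (filter (fun A => decP (consis A)) (allb (length Cl)))));
      disj (map chi (allb (length Cl)));
      conj (map (fun x => FNeg (chi x))
      (filter (fun x => negb (decP (consis x))) (allb (length Cl))))].
Qed.

Lemma mem_Pv A c : Pv c -> mem A c.
Proof. intros H. unfold mem. pr [c]. Qed.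
Lemma mem_imp A a b : mem A a -> Pv (FImp a b) -> mem A b.
Proof. unfold mem; intros H1 H2. pr [FImp (chi A) a; FImp a b]. Qed.
Lemma mem_and A a b : mem A a -> mem A b -> mem A (FAnd a b).
Proof. unfold mem; intros H1 H2. pr [FImp (chi A) a; FImp (chi A) b]. Qed.
Lemma mem_conj A L : (forall x, In x L -> mem A x) -> mem A (conj L).
Proof.
  induction L as [|x L IH]; simpl; intros H.
  - apply mem_Pv, taut; btac.
  - apply mem_and; auto.
Qed.
Lemma mem_prop A L c : (forall x, In x L -> mem A x) -> Pv (FImp (conj L) c) -> mem A c.
Proof. intros H1 H2. eapply mem_imp; [apply mem_conj, H1|exact H2]. Qed.

Lemma combine_in (L : list F) (A : list bool) psi : In psi L -> length A = length L ->
  exists b, In (psi, b) (combine L A).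
Proof.
  revert A; induction L as [|x L IH]; destruct A as [|b A]; simpl; intros H1 H2;
    try contradiction; try discriminate.
  destruct H1 as [<-|H1]; [exists b; left; auto|].
  destruct (IH A H1 ltac:(lia)) as [c Hc]. exists c; right; auto.
Qed.
Lemma mem_decide A psi : In psi Cl -> length A = length Cl -> mem A psi \/ mem A (FNeg psi).
Proof.
  intros H1 H2. destruct (combine_in Cl A psi H1 H2) as [b Hb].
  pose proof (conj_elem extra (map lit (combine Cl A)) (lit (psi, b)) (in_map _ _ _ Hb)) as H.
  destruct b; [left|right]; exact H.
Qed.
Lemma mem_both A psi : consis A -> mem A psi -> mem A (FNeg psi) -> False.
Proof. unfold mem; intros H H1 H2. apply H. pr [FImp (chi A) psi; FImp (chi A) (FNeg psi)]. Qed.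
Lemma Lall_in A : In A Lall -> consis A /\ length A = length Cl.
Proof. unfold Lall; intros H. apply filter_In in H. destruct H as [H1 H2].
  rewrite decP_true in H2. split; auto. eapply allb_len; eauto. Qed.

Lemma next_lemma A B t : step A B -> mem A (FNext t) -> mem B (FNeg t) -> False.
Proof.
  unfold mem; intros HS HA HB. apply HS.
  assert (h1 : Pv (FImp t (FNeg (chi B)))) by pr [FImp (chi B) (FNeg t)].
  apply NX_mono in h1.
  pr [FImp (chi A) (FNext t); FImp (FNext t) (FNext (FNeg (chi B)))].
Qed.

Lemma K A : mem A (FNext (disj (map chi (succs A)))).
Proof.
  set (L := map (fun B => FNeg (chi B)) (filter (fun B => negb (decP (step A B))) Lall)).
  pose proof (disj_filter extra chi (fun B => decP (step A B)) Lall) as H.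
  change (Pv (FImp (conj (disj (map chi Lall) :: L)) (disj (map chi (succs A))))) in H.
  apply NX_list in H. eapply mem_imp; [|exact H]. apply mem_conj.
  intros x Hx. apply in_map_iff in Hx. destruct Hx as [y [<- [Hy|Hy]]].
  - subst y. apply mem_Pv, R_RT1, Pv_Lall.
  - unfold L in Hy. apply in_map_iff in Hy. destruct Hy as [B [<- HB]].
    apply filter_In in HB. destruct HB as [_ HB].
    rewrite negb_true_iff, decP_false in HB. unfold step in HB. apply NNPP in HB.
    unfold mem. pr [FNeg (FAnd (chi A) (FSNext (chi B)))].
Qed.

Lemma nonlast_succ A : ~ islast A -> exists B, In B Lall /\ step A B.
Proof.
  intros H. destruct (succs A) as [|B r] eqn:E.
  - exfalso; apply H. pose proof (K A) as H0. rewrite E in H0. exact H0.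
  - exists B. assert (HB : In B (succs A)) by (rewrite E; left; auto).
    unfold succs in HB. apply filter_In in HB. destruct HB as [H1 H2].
    rewrite decP_true in H2. auto.
Qed.
Lemma last_nostep A B : islast A -> step A B -> False.
Proof.
  intros H HS. apply (next_lemma A B (FFalse p0) HS H). apply mem_Pv, taut; btac.
Qed.

Lemma persist A B a b : In (FUntil a b) Cl -> In b Cl -> In A Lall -> In B Lall ->
  step A B -> mem A (FUntil a b) -> ~ mem A b -> mem B (FUntil a b).
Proof.
  intros Hu Hb HA HB HS Hm Hn.
  destruct (Lall_in A HA) as [cA lA]. destruct (Lall_in B HB) as [cB lB].
  assert (Hnb : mem A (FNeg b)) by (destruct (mem_decide A b Hb lA); tauto).
  pose proof (Ax_T2' p0 extra a b) as T2. pose proof (Ax_T3' p0 extra (FUntil a b)) as T3.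
  assert (HT2 : mem A (FIff (FUntil a b) (FOr b (FAnd a (FSNext (FUntil a b)))))) by (apply mem_Pv; auto).
  assert (HT3 : mem A (FIff (FNext (FUntil a b)) (FOr (FNext (FFalse p0)) (FSNext (FUntil a b))))) by (apply mem_Pv; auto).
  assert (Hx : mem A (FNext (FUntil a b))).
  { apply (mem_prop A [FUntil a b; FNeg b; FIff (FUntil a b) (FOr b (FAnd a (FSNext (FUntil a b))));
        FIff (FNext (FUntil a b)) (FOr (FNext (FFalse p0)) (FSNext (FUntil a b)))]).
    - intros x Hx; simpl in Hx; repeat (destruct Hx as [Hx|Hx]; [subst x; assumption|]); contradiction.
    - apply taut; btac. }
  destruct (mem_decide B (FUntil a b) Hu lB) as [h|h]; auto.
  exfalso; apply (next_lemma A B _ HS Hx h).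
Qed.

Lemma last_until A a b : islast A -> mem A (FUntil a b) -> mem A b.
Proof.
  intros Hl Hm.
  assert (h : Pv (FImp (FFalse p0) (FNeg (FUntil a b)))) by (apply taut; btac).
  apply NX_mono in h.
  pose proof (Ax_T2' p0 extra a b) as T2.
  apply (mem_prop A [FNext (FFalse p0); FUntil a b;
      FIff (FUntil a b) (FOr b (FAnd a (FSNext (FUntil a b))));
      FImp (FNext (FFalse p0)) (FNext (FNeg (FUntil a b)))]).
  - intros x Hx; simpl in Hx; repeat (destruct Hx as [Hx|Hx]; [subst x; try assumption; apply mem_Pv; assumption|]); contradiction.
  - apply taut; btac.
Qed.

Fixpoint path (A : list bool) (l : list (list bool)) : Prop :=
  match l with [] => True | B :: l' => In B Lall /\ step A B /\ path B l' end.
Fixpoint lastA (A : list bool) (l : list (list bool)) : list bool :=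
  match l with [] => A | B :: l' => lastA B l' end.
Lemma path_app A l1 l2 : path A (l1 ++ l2) <-> path A l1 /\ path (lastA A l1) l2.
Proof. revert A; induction l1; simpl; intros A; [tauto|]. rewrite IHl1. tauto. Qed.
Lemma lastA_app A l1 l2 : lastA A (l1 ++ l2) = lastA (lastA A l1) l2.
Proof. revert A; induction l1; simpl; auto. Qed.
Lemma lastA_in A l : In A Lall -> path A l -> In (lastA A l) Lall.
Proof. revert A; induction l; simpl; intros A H1 H2; auto. apply IHl; tauto. Qed.
Lemma lastA_mem A l : In (lastA A l) (A :: l).
Proof. revert A; induction l; simpl; intros A; auto. destruct (IHl a); auto. Qed.

Lemma ev A a b : In (FUntil a b) Cl -> In b Cl -> In A Lall -> mem A (FUntil a b) ->
  exists l, path A l /\ mem (lastA A l) b.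
Proof.
  intros Hu Hb HA Hm. apply NNPP; intro Hno.
  set (reach := fun B => exists l, path A l /\ lastA A l = B).
  set (R := filter (fun B => decP (reach B)) Lall).
  assert (H : Pv (FImp (disj (map chi R)) (FAnd (FNeg b) (FNext (disj (map chi R)))))).
  { apply disj_imp. intros x Hx. apply in_map_iff in Hx. destruct Hx as [B [<- HB]].
    unfold R in HB. apply filter_In in HB. destruct HB as [HB1 HB2].
    rewrite decP_true in HB2. destruct HB2 as [l [Hp Hl]].
    destruct (Lall_in B HB1) as [cB lB].
    apply mem_and.
    - destruct (mem_decide B b Hb lB) as [h|h]; auto.
      exfalso; apply Hno; exists l; rewrite Hl; auto.
    - eapply mem_imp; [apply K|]. apply NX_mono, disj_sub.
      intros y Hy. apply in_map_iff in Hy. destruct Hy as [C [<- HC]].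
      apply in_map. unfold succs in HC. apply filter_In in HC. destruct HC as [HC1 HC2].
      rewrite decP_true in HC2. unfold R. apply filter_In. split; auto.
      apply decP_true. exists (l ++ [C]). rewrite path_app, lastA_app, Hl. simpl; tauto. }
  apply R_RT2 with (phi := a) in H.
  assert (HA' : Pv (FImp (chi A) (disj (map chi R)))).
  { apply disj_elem. apply in_map. unfold R. apply filter_In. split; auto.
    apply decP_true. exists []. simpl; auto. }
  destruct (Lall_in A HA) as [cA _].
  apply (mem_both A (FUntil a b) cA Hm). unfold mem.
  pr [FImp (chi A) (disj (map chi R)); FImp (disj (map chi R)) (FNeg (FUntil a b))].
Qed.

Definition MacroP A l := path A l /\ (~ islast A -> l <> []) /\
  (forall a b, In (FUntil a b) Cl -> mem A (FUntil a b) -> exists B, In B (A :: l) /\ mem B b).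

Lemma persist_path a b : In (FUntil a b) Cl -> In b Cl -> forall l A, In A Lall -> path A l ->
  mem A (FUntil a b) -> (forall B, In B (A :: l) -> ~ mem B b) -> mem (lastA A l) (FUntil a b).
Proof.
  intros Hu Hb l; induction l as [|C l IH]; simpl; intros A HA Hp Hm Hn; auto.
  destruct Hp as [HC [HS Hp]]. apply IH; auto; apply (persist A C a b); auto.
Qed.

Hypothesis Hcl : subcl Cl.
Lemma cl_until a b : In (FUntil a b) Cl -> In a Cl /\ In b Cl.
Proof. intros H. apply Hcl in H. split; apply H; simpl; auto. Qed.

Lemma macro_ex A : In A Lall -> exists l, MacroP A l.
Proof.
  intros HA.
  assert (HU : forall U, incl U Cl -> exists l, path A l /\
    (forall a b, In (FUntil a b) U -> mem A (FUntil a b) -> exists B, In B (A :: l) /\ mem B b)).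
  { induction U as [|x U IH]; intros Hi.
    - exists []; simpl; split; auto. intros; contradiction.
    - destruct IH as [l [Hp Hl]]. { intros y Hy; apply Hi; right; auto. }
      destruct (classic (exists a b, x = FUntil a b /\ mem A x /\
          ~ exists B, In B (A :: l) /\ mem B b)) as [[a [b [Ex [Hm Hn]]]]|Hc].
      + subst x. assert (Hu : In (FUntil a b) Cl) by (apply Hi; left; auto).
        destruct (cl_until a b Hu) as [_ Hb].
        assert (Hm' : mem (lastA A l) (FUntil a b)).
        { apply persist_path; auto. intros B HB HB'; apply Hn; eauto. }
        destruct (ev (lastA A l) a b Hu Hb (lastA_in A l HA Hp) Hm') as [l2 [Hp2 Hb2]].
        exists (l ++ l2). split; [apply path_app; auto|].
        intros a' b' Hin Hm2. destruct Hin as [Heq|Hin].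
        * injection Heq; intros; subst. exists (lastA A (l ++ l2)).
          split; [apply lastA_mem|]. rewrite lastA_app; auto.
        * destruct (Hl a' b' Hin Hm2) as [B [HB HB']]. exists B. split; auto.
          destruct HB as [HB|HB]; [left; auto|right; apply in_or_app; auto].
      + exists l. split; auto. intros a b Hin Hm2. destruct Hin as [Heq|Hin]; [|eapply Hl; eauto].
        subst x. apply NNPP; intro Hn. apply Hc. exists a, b. repeat split; auto. }
  destruct (HU Cl (incl_refl _)) as [l [Hp Hl]].
  destruct (classic (l = [] /\ ~ islast A)) as [[E Hnl]|Hc].
  - subst l. destruct (nonlast_succ A Hnl) as [B [HB HS]].
    exists [B]. split; [simpl; auto|]. split; [intros _ Hd; discriminate|].
    intros a b Hin Hm. destruct (Hl a b Hin Hm) as [C [[<-|[]] HC]].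
    exists A; simpl; auto.
  - exists l. split; [auto|]. split; [|auto]. intros Hnl E. apply Hc; auto.
Qed.

Definition macro (A : list bool) : list (list bool) := epsilon (inhabits []) (fun l => MacroP A l).
Lemma macro_spec A : In A Lall -> MacroP A (macro A).
Proof. intros H; unfold macro; apply epsilon_spec; apply macro_ex; auto. Qed.

Definition nxt (s : list bool * list (list bool)) : list bool * list (list bool) :=
  match snd s with
  | B :: r => (B, r)
  | [] => match macro (fst s) with [] => s | B :: r => (B, r) end
  end.

Variable A0 : list bool.
Hypothesis HA0 : In A0 Lall.
Fixpoint st (n : nat) := match n with 0 => (A0, []) | S n => nxt (st n) end.
Definition aa n := fst (st n).

Lemma inv_st n : In (fst (st n)) Lall /\ path (fst (st n)) (snd (st n)).
Proof.
  induction n as [|n IH]; simpl; [split; auto|].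
  destruct (st n) as [A p]; simpl in *. destruct IH as [HA Hp]. unfold nxt; simpl.
  destruct p as [|B r].
  - pose proof (macro_spec A HA) as [Hm _]. destruct (macro A) as [|B r]; simpl; auto.
    simpl in Hm; tauto.
  - simpl in Hp; simpl; tauto.
Qed.
Lemma aa_Lall n : In (aa n) Lall.
Proof. apply inv_st. Qed.
Lemma step_seq n : ~ islast (aa n) -> step (aa n) (aa (S n)).
Proof.
  unfold aa; simpl. pose proof (inv_st n) as [HA Hp].
  destruct (st n) as [A p]; simpl in *. intros Hnl. unfold nxt; simpl.
  destruct p as [|B r].
  - pose proof (macro_spec A HA) as [Hm [Hne _]]. destruct (macro A) as [|B r]; simpl.
    + exfalso; apply (Hne Hnl); auto.
    + simpl in Hm; tauto.
  - simpl in Hp; tauto.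
Qed.
Lemma st_S q C r : snd (st q) = C :: r -> st (S q) = (C, r).
Proof. intros H; simpl; unfold nxt; rewrite H; reflexivity. Qed.
Lemma drain l : forall q, snd (st q) = l -> forall B, In B l -> exists t, aa (q + S t) = B.
Proof.
  induction l as [|C r IH]; intros q Hq B HB; [contradiction|].
  pose proof (st_S q C r Hq) as E.
  destruct HB as [<-|HB].
  - exists 0. unfold aa. rewrite Nat.add_1_r, E; reflexivity.
  - destruct (IH (S q)) with (B := B) as [t Ht]; auto. rewrite E; reflexivity.
    exists (S t). rewrite <- Ht. f_equal. lia.
Qed.
Lemma empty_ex n : exists p, n <= p /\ snd (st p) = [].
Proof.
  assert (H : forall k n, length (snd (st n)) <= k -> exists p, n <= p /\ snd (st p) = []).
  { induction k; intros m Hm.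
    - exists m; split; auto. destruct (snd (st m)); simpl in Hm; auto; lia.
    - destruct (snd (st m)) as [|C r] eqn:E; [exists m; auto|].
      destruct (IHk (S m)) as [p [H1 H2]].
      + rewrite (st_S m C r E). simpl. simpl in Hm; lia.
      + exists p; split; auto; lia. }
  apply (H _ n (le_n _)).
Qed.

Lemma fulfil n a b : In (FUntil a b) Cl -> mem (aa n) (FUntil a b) -> exists j, n <= j /\ mem (aa j) b.
Proof.
  intros Hu Hm. apply NNPP; intro Hno.
  destruct (cl_until a b Hu) as [_ Hb].
  assert (Hall : forall d, mem (aa (n + d)) (FUntil a b)).
  { induction d.
    - rewrite Nat.add_0_r; auto.
    - assert (Hnb : ~ mem (aa (n + d)) b) by (intro h; apply Hno; exists (n + d); split; auto; lia).
      destruct (classic (islast (aa (n + d)))) as [Hl|Hl].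
      + exfalso; apply Hnb, (last_until _ a b Hl IHd).
      + replace (n + S d) with (S (n + d)) by lia.
        apply (persist (aa (n + d)) _ a b); auto using aa_Lall, step_seq. }
  destruct (empty_ex n) as [p [Hp He]].
  pose proof (Hall (p - n)) as Hmp. replace (n + (p - n)) with p in Hmp by lia.
  pose proof (macro_spec (aa p) (aa_Lall p)) as [_ [_ Hu']].
  destruct (Hu' a b Hu Hmp) as [B [HB HBb]].
  destruct HB as [<-|HB]; [apply Hno; exists p; split; auto|].
  destruct (macro (aa p)) as [|C r] eqn:E; [contradiction|].
  assert (Es : st (S p) = (C, r)).
  { simpl; unfold nxt; rewrite He. unfold aa in E. rewrite E. reflexivity. }
  destruct HB as [<-|HB].
  - apply Hno; exists (S p); split; [lia|]. unfold aa; rewrite Es; auto.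
  - destruct (drain r (S p)) with (B := B) as [t Ht]; auto. rewrite Es; auto.
    apply Hno. exists (S p + S t). split; [lia|]. rewrite Ht; auto.
Qed.

Section Model.
Variable len : option nat.
Definition MM : tstruct Phi0 := @TStruct Phi0 nat (fun k => k) len (fun k p => mem (aa k) (FVar p)).
Hypothesis Hlen : forall k, is_pos MM k -> (is_last MM k <-> islast (aa k)).

Lemma truth : forall psi, In psi Cl -> forall i, is_pos MM i -> (sat MM i psi <-> mem (aa i) psi).
Proof.
  induction psi as [p|a IHa|a IHa b IHb|a IHa|a IHa b IHb]; intros Hin i Hi.
  - reflexivity.
  - assert (Ha : In a Cl) by (apply (Hcl _ Hin); simpl; auto).
    destruct (Lall_in _ (aa_Lall i)) as [ci li].
    rewrite sat_neg, IHa; auto. split.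
    + intros h. destruct (mem_decide _ a Ha li); tauto.
    + intros h1 h2. apply (mem_both _ a ci h2 h1).
  - assert (Ha : In a Cl) by (apply (Hcl _ Hin); simpl; auto).
    assert (Hb : In b Cl) by (apply (Hcl _ Hin); simpl; auto).
    rewrite sat_and, IHa, IHb; auto. split.
    + intros [h1 h2]; apply mem_and; auto.
    + intros h. split; eapply mem_imp; try exact h; apply taut; btac.
  - assert (Ha : In a Cl) by (apply (Hcl _ Hin); simpl; auto).
    destruct (Lall_in _ (aa_Lall i)) as [ci li].
    destruct (Lall_in _ (aa_Lall (S i))) as [ci' li'].
    assert (Hfa : Pv (FImp (FNext (FFalse p0)) (FNext a))) by (apply NX_mono, taut; btac).
    rewrite sat_next. destruct (classic (islast (aa i))) as [Hl|Hl].
    + split; [intros _; eapply mem_imp; eauto|intros _; left; apply Hlen; auto].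
    + assert (Hnl : ~ is_last MM i) by (rewrite Hlen; auto).
      assert (Hp : is_pos MM (S i)) by (apply pos_next; auto).
      pose proof (step_seq i Hl) as HS.
      rewrite IHa; auto. split.
      * intros [h|h]; [contradiction|].
        destruct (mem_decide _ (FNext a) Hin li) as [h'|h']; auto. exfalso.
        pose proof (Ax_T3' p0 extra a) as T3.
        assert (h2 : mem (aa i) (FNext (FNeg a))).
        { apply (mem_prop _ [FNeg (FNext a); FIff (FNext a) (FOr (FNext (FFalse p0)) (FSNext a))]).
          - intros x Hx; simpl in Hx; repeat (destruct Hx as [Hx|Hx]; [subst x; try assumption; apply mem_Pv; assumption|]); contradiction.
          - apply taut; btac. }
        apply (next_lemma _ _ _ HS h2). eapply mem_imp; [exact h|]. apply taut; btac.
      * intros h. right. destruct (mem_decide _ a Ha li') as [h'|h']; auto.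
        exfalso; apply (next_lemma _ _ _ HS h h').
  - destruct (cl_until a b Hin) as [Ha Hb].
    pose proof (Ax_T2' p0 extra a b) as T2.
    simpl sat. split.
    + intros [j [Hij [Hpj [Hbj Haj]]]].
      assert (Hd : forall d, d <= j - i -> mem (aa (j - d)) (FUntil a b)).
      { induction d; intros Hd.
        - rewrite Nat.sub_0_r. apply IHb in Hbj; auto.
          apply (mem_prop _ [b; FIff (FUntil a b) (FOr b (FAnd a (FSNext (FUntil a b))))]).
          + intros x Hx; simpl in Hx; repeat (destruct Hx as [Hx|Hx]; [subst x; try assumption; apply mem_Pv; assumption|]); contradiction.
          + apply taut; btac.
        - set (k := j - S d).
          assert (Hpk : is_pos MM k) by (apply (pos_le MM k j); auto; unfold k; lia).
          assert (Hnl : ~ islast (aa k)) by (rewrite <- Hlen; auto; apply (last_lt MM k j); auto; unfold k; lia).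
          pose proof (step_seq k Hnl) as HS.
          assert (Hk : S k = j - d) by (unfold k; lia).
          rewrite Hk in HS. specialize (IHd ltac:(lia)).
          assert (Hak : mem (aa k) a) by (apply IHa; auto; apply Haj; unfold k; lia).
          destruct (Lall_in _ (aa_Lall k)) as [ck lk].
          destruct (mem_decide _ (FUntil a b) Hin lk) as [h|h]; auto. exfalso.
          assert (h2 : mem (aa k) (FNext (FNeg (FUntil a b)))).
          { apply (mem_prop _ [a; FNeg (FUntil a b); FIff (FUntil a b) (FOr b (FAnd a (FSNext (FUntil a b))))]).
            - intros x Hx; simpl in Hx; repeat (destruct Hx as [Hx|Hx]; [subst x; try assumption; apply mem_Pv; assumption|]); contradiction.
            - apply taut; btac. }
          apply (next_lemma _ _ _ HS h2). eapply mem_imp; [exact IHd|]. apply taut; btac. }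
      specialize (Hd (j - i) (le_n _)). replace (j - (j - i)) with i in Hd by lia. auto.
    + intros Hm. destruct (fulfil i a b Hin Hm) as [j [Hij Hbj]].
      destruct (min_ex (fun j => i <= j /\ mem (aa j) b) j (Logic.conj Hij Hbj)) as [j0 [[Hij0 Hb0] Hmin]].
      assert (Hall : forall d, i + d <= j0 -> is_pos MM (i + d) /\ mem (aa (i + d)) (FUntil a b)).
      { induction d; intros Hd.
        - rewrite Nat.add_0_r; auto.
        - destruct (IHd ltac:(lia)) as [Hp Hm'].
          assert (Hnb : ~ mem (aa (i + d)) b) by (intro h; apply (Hmin (i + d)); [lia | split; [lia | exact h]]).
          assert (Hnl : ~ islast (aa (i + d))) by (intro Hl; apply Hnb, (last_until _ a b Hl Hm')).
          replace (i + S d) with (S (i + d)) by lia. split.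
          + apply pos_next; auto. rewrite Hlen; auto.
          + apply (persist (aa (i + d)) _ a b); auto using aa_Lall, step_seq. }
      exists j0. destruct (Hall (j0 - i) ltac:(lia)) as [Hpj0 _].
      replace (i + (j0 - i)) with j0 in Hpj0 by lia.
      split; auto. split; auto. split; [apply IHb; auto|].
      intros k Hk. destruct (Hall (k - i) ltac:(lia)) as [Hpk Hmk].
      replace (i + (k - i)) with k in * by lia.
      apply IHa; auto.
      destruct (Lall_in _ (aa_Lall k)) as [ck lk].
      assert (Hnb : mem (aa k) (FNeg b)).
      { destruct (mem_decide _ b Hb lk) as [h|h]; auto. exfalso; apply (Hmin k); [lia | split; [lia | exact h]]. }
      apply (mem_prop _ [FUntil a b; FNeg b; FIff (FUntil a b) (FOr b (FAnd a (FSNext (FUntil a b))))]).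
      * intros x Hx; simpl in Hx; repeat (destruct Hx as [Hx|Hx]; [subst x; try assumption; apply mem_Pv; assumption|]); contradiction.
      * apply taut; btac.
Qed.
End Model.
End Atoms.

Fixpoint sub (f : F) : list F :=
  f :: match f with FNeg a => sub a | FAnd a b => sub a ++ sub b | FNext a => sub a
       | FUntil a b => sub a ++ sub b | FVar _ => [] end.
Lemma sub_head f : In f (sub f).
Proof. destruct f; simpl; auto. Qed.
Lemma children_sub g : incl (children g) (sub g).
Proof.
  destruct g; simpl; intros x Hx; try contradiction.
  - destruct Hx as [<-|[]]. right; apply sub_head.
  - destruct Hx as [<-|[<-|[]]]; right; apply in_or_app; [left|right]; apply sub_head.
  - destruct Hx as [<-|[]]. right; apply sub_head.
  - destruct Hx as [<-|[<-|[]]]; right; apply in_or_app; [left|right]; apply sub_head.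
Qed.
Lemma sub_trans f : forall g, In g (sub f) -> incl (sub g) (sub f).
Proof.
  induction f; simpl; intros g [<-|H]; try apply incl_refl; try contradiction.
  - apply incl_tl; auto.
  - apply incl_tl. apply in_app_or in H. destruct H as [H|H].
    + apply incl_appl; auto.
    + apply incl_appr; auto.
  - apply incl_tl; auto.
  - apply incl_tl. apply in_app_or in H. destruct H as [H|H].
    + apply incl_appl; auto.
    + apply incl_appr; auto.
Qed.
Lemma subcl_sub f : subcl (sub f).
Proof. intros g Hg. eapply incl_tran; [apply children_sub|]. apply sub_trans; auto. Qed.
Lemma subcl_app L1 L2 : subcl L1 -> subcl L2 -> subcl (L1 ++ L2).
Proof.
  intros H1 H2 g Hg. apply in_app_or in Hg. destruct Hg as [Hg|Hg].
  - apply incl_appl; auto.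
  - apply incl_appr; auto.
Qed.

Lemma complete_gen phi : ~ Pv phi -> exists M : tstruct Phi0, ~ sat M 0 phi /\
  (Pv (FNeg (FNext (FFalse p0))) -> is_infinite M) /\
  (Pv (FEv p0 (FNext (FFalse p0))) -> is_finite M).
Proof.
  intros Hn. set (Cl := sub phi ++ sub (FEv p0 (FNext (FFalse p0)))).
  assert (Hcl : subcl Cl) by (apply subcl_app; apply subcl_sub).
  assert (Hphi : In phi Cl) by (apply in_or_app; left; apply sub_head).
  assert (Hfin : In (FEv p0 (FNext (FFalse p0))) Cl) by (apply in_or_app; right; apply sub_head).
  assert (HA0 : exists A0, In A0 (Lall Cl) /\ mem Cl A0 (FNeg phi)).
  { apply NNPP; intro H. apply Hn. eapply R_MP; [apply (Pv_Lall Cl)|]. apply disj_imp.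
    intros x Hx. apply in_map_iff in Hx. destruct Hx as [A [<- HA]].
    destruct (Lall_in Cl A HA) as [_ lA].
    destruct (mem_decide Cl A phi Hphi lA) as [h|h]; [exact h|]. exfalso; apply H; eauto. }
  destruct HA0 as [A0 [HA0 Hm0]].
  destruct (Lall_in Cl A0 HA0) as [c0 _].
  destruct (classic (exists k, islast Cl (aa Cl A0 k))) as [[k Hk]|Hnk].
  - destruct (min_ex (fun j => islast Cl (aa Cl A0 j)) k Hk) as [n [Hn1 Hn2]].
    exists (MM Cl A0 (Some n)).
    assert (Hlen : forall j, is_pos (MM Cl A0 (Some n)) j ->
       (is_last (MM Cl A0 (Some n)) j <-> islast Cl (aa Cl A0 j))).
    { intros j Hj; unfold is_pos, is_last in *; simpl in *. split.
      - intros E; injection E; intros; subst; auto.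
      - intros Hl. destruct (Nat.eq_dec j n); [subst; auto|]. exfalso; apply (Hn2 j); [lia | exact Hl]. }
    pose proof (truth Cl Hcl A0 HA0 (Some n) Hlen phi Hphi 0 ltac:(unfold is_pos; simpl; lia)) as Ht.
    split; [|split].
    + rewrite Ht. intro h. apply (mem_both Cl A0 phi c0 h Hm0).
    + intros Hinf. exfalso.
      destruct (Lall_in Cl _ (aa_Lall Cl Hcl A0 HA0 n)) as [cn _].
      apply (mem_both Cl _ _ cn Hn1 (mem_Pv Cl _ _ Hinf)).
    + intros _; exists n; reflexivity.
  - exists (MM Cl A0 None).
    assert (Hlen : forall j, is_pos (MM Cl A0 None) j ->
       (is_last (MM Cl A0 None) j <-> islast Cl (aa Cl A0 j))).
    { intros j Hj; unfold is_pos, is_last in *; simpl in *. split.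
      - intros E; discriminate.
      - intros Hl; exfalso; apply Hnk; eauto. }
    pose proof (truth Cl Hcl A0 HA0 None Hlen phi Hphi 0 I) as Ht.
    split; [|split].
    + rewrite Ht. intro h. apply (mem_both Cl A0 phi c0 h Hm0).
    + intros _; reflexivity.
    + intros Hf. exfalso. pose proof (mem_Pv Cl A0 _ Hf) as h.
      destruct (fulfil Cl Hcl A0 HA0 0 _ _ Hfin h) as [j [_ Hj]].
      apply Hnk; exists j; exact Hj.
Qed.
End Comp.

End Main.

Lemma pos0 {Phi0} (M : tstruct Phi0) : is_pos M 0.
Proof. unfold is_pos; destruct (tlen M); auto; lia. Qed.

Theorem theorem1 (Phi0 : Type) (p0 : Phi0) :
  (forall phi : form Phi0,
      AXgen p0 phi <-> valid_in (fun _ : tstruct Phi0 => True) phi) /\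
  (forall phi : form Phi0,
      AXinf p0 phi <-> valid_in (@is_infinite Phi0) phi) /\
  (forall phi : form Phi0,
      AXfin p0 phi <-> valid_in (@is_finite Phi0) phi).
Proof.
  split; [|split]; intros phi; split.
  - apply sound. intros psi [].
  - intros Hv. apply NNPP; intro Hn.
    destruct (complete_gen Phi0 p0 (no_extra (Phi0:=Phi0)) phi Hn) as [M [HM _]].
    apply HM, Hv; auto using pos0.
  - apply sound. intros psi Hpsi; unfold inf_axiom in Hpsi; subst.
    intros M HM i Hi. rewrite sat_neg, sat_next, sat_false.
    unfold is_last; rewrite HM. intros [H|H]; [discriminate|auto].
  - intros Hv. apply NNPP; intro Hn.
    destruct (complete_gen Phi0 p0 (inf_axiom p0) phi Hn) as [M [HM [Hi _]]].
    apply HM, Hv; [apply Hi; apply Ax_extra; reflexivity | apply pos0].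
  - apply sound. intros psi Hpsi; unfold fin_axiom in Hpsi; subst.
    intros M [n Hn] i Hi. unfold FEv.
    change (exists j, i <= j /\ is_pos M j /\ sat M j (FNext (FFalse p0)) /\
      (forall k, i <= k < j -> sat M k (FTrue p0))).
    exists n. unfold is_pos in *. rewrite Hn in *.
    split; [auto|]. split; [auto|]. split; [rewrite sat_next; left; exact Hn|].
    intros; apply sat_true.
  - intros Hv. apply NNPP; intro Hn.
    destruct (complete_gen Phi0 p0 (fin_axiom p0) phi Hn) as [M [HM [_ Hf]]].
    apply HM, Hv; [apply Hf; apply Ax_extra; reflexivity | apply pos0].
Qed.
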